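(* Let $x_s<x_t$ be integers, let $C\ge 0$, and let $f:[x_s,x_t]\to\mathbb{R}$ be such that $([x_s,x_t],f)$ is an Ameso($C$) pair. Suppose there exist $x^0\in[x_s,x_t]$ and a positive integer $b$ with $[x^0-b,x^0]\subseteq[x_s,x_t]$ such that $f(x^0)=\min_{y\in[x^0-b,x_t]}f(y)$ and $f(x^0)+C\le \max_{y\in[x^0-b,x^0]}f(y)$. Then $f(x^0)=\min_{y\in[x_s,x_t]}f(y)$.
   Context: For integers $a\le b$, $[a,b]$ denotes the set of integers $\{a,a+1,\dots,b\}$. Floors and ceilings of vectors are taken componentwise. A set $D^n\subseteq\mathbb{Z}^n$ is an Ameso set if $\lceil(\vec x+\vec y)/2\rceil,\lfloor(\vec x+\vec y)/2\rfloor\in D^n$ for all $\vec x,\vec y\in D^n$. For $C\ge 0$, $(D^n,f)$ is an Ameso($C$) pair if $D^n$ is an Ameso set, $f:D^n\to\mathbb{R}$ is bounded below, and $f(\vec x)+f(\vec y)+C\ge f(\lceil(\vec x+\vec y)/2\rceil)+f(\lfloor(\vec x+\vec y)/2\rfloor)$ for all $\vec x,\vec y\in D^n$. *)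

(* Defs.v *)
From Stdlib Require Import Reals ZArith Lia Lra.
Open Scope R_scope.

Definition zfloor_half (z : Z) : Z := Z.div z 2.
Definition zceil_half (z : Z) : Z := Z.opp (Z.div (Z.opp z) 2).

Definition in_Zint (a b x : Z) : Prop := (a <= x <= b)%Z.

Definition ameso_set (D : Z -> Prop) : Prop :=
  forall x y, D x -> D y ->
    D (zceil_half (x + y)) /\ D (zfloor_half (x + y)).

(* Ameso(C) pair (D, f), f only meaningful on D *)
Definition ameso_pair (C : R) (D : Z -> Prop) (f : Z -> R) : Prop :=
  ameso_set D /\
  (exists m : R, forall x, D x -> m <= f x) /\
  (forall x y, D x -> D y ->
     f x + f y + C >= f (zceil_half (x + y)) + f (zfloor_half (x + y))).

(* Main.v *)
Require Import Defs.
From Stdlib Require Import Reals ZArith Lia Lra.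
Open Scope R_scope.

Lemma mid2 (a c w : Z) : (a + c = 2 * w)%Z ->
  zceil_half (a + c) = w /\ zfloor_half (a + c) = w.
Proof.
  intros H. unfold zceil_half, zfloor_half. rewrite H.
  replace (- (2 * w))%Z with ((- w) * 2)%Z by ring.
  replace (2 * w)%Z with (w * 2)%Z by ring.
  rewrite !Z.div_mul by lia. split; lia.
Qed.

Lemma bounded (f : Z -> R) (a : Z) (n : nat) :
  exists M, forall y, (a <= y <= a + Z.of_nat n)%Z -> f y <= M.
Proof.
  induction n as [|n [M HM]].
  - exists (f a). intros y Hy. replace y with a by lia. lra.
  - exists (Rmax M (f (a + Z.of_nat (S n))%Z)). intros y Hy.
    destruct (Z.eq_dec y (a + Z.of_nat (S n))%Z) as [->|Hne].
    + apply Rmax_r.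
    + eapply Rle_trans; [apply HM; lia| apply Rmax_l].
Qed.

Section Core.
Variables (xs xt : Z) (C : R) (f : Z -> R) (z x0 : Z).
Hypothesis HC : forall x y, in_Zint xs xt x -> in_Zint xs xt y ->
     f x + f y + C >= f (zceil_half (x + y)) + f (zfloor_half (x + y)).
Hypothesis HCnn : 0 <= C.
Hypothesis Hz : (xs <= z)%Z.
Hypothesis Hx0 : (x0 <= xt)%Z.
Hypothesis Hzx : (z < x0)%Z.
Hypothesis Hlow : f z < f x0.

Lemma step : forall k : nat, forall w e, Z.to_nat (w - z) = k ->
  0 <= e -> (z < w < x0)%Z -> f w >= f x0 + C + e ->
  exists w', (z < w' < x0)%Z /\ f w' >= f x0 + C + e + (f x0 - f z).
Proof.
  intro k. induction k as [k IH] using (well_founded_induction lt_wf).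
  intros w e Hk He Hw Hfw.
  destruct (Z_le_gt_dec (w - z) (x0 - w)) as [Hle|Hgt].
  - set (y := (2 * w - z)%Z).
    assert (Hs : (z + y = 2 * w)%Z) by (unfold y; ring).
    destruct (mid2 z y w Hs) as [E1 E2].
    assert (Hd1 : in_Zint xs xt z) by (unfold in_Zint; lia).
    assert (Hd2 : in_Zint xs xt y) by (unfold in_Zint, y; lia).
    assert (Hd := HC z y Hd1 Hd2).
    rewrite E1, E2 in Hd.
    destruct (Z.eq_dec y x0) as [Hy|Hy].
    + rewrite Hy in Hd. exfalso. lra.
    + exists y. split; [unfold y in *; lia| lra].
  - set (u := (2 * w - x0)%Z).
    assert (Hs : (u + x0 = 2 * w)%Z) by (unfold u; ring).
    destruct (mid2 u x0 w Hs) as [E1 E2].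
    assert (Hd1 : in_Zint xs xt u) by (unfold in_Zint, u; lia).
    assert (Hd2 : in_Zint xs xt x0) by (unfold in_Zint; lia).
    assert (Hd := HC u x0 Hd1 Hd2).
    rewrite E1, E2 in Hd.
    destruct (IH (Z.to_nat (u - z)) ltac:(unfold u; lia) u (2 * e) eq_refl
               ltac:(lra) ltac:(unfold u; lia) ltac:(lra)) as [w' [Hw' Hf']].
    exists w'. split; [exact Hw'| lra].
Qed.

Lemma iter : forall n : nat, forall w, (z < w < x0)%Z -> f w >= f x0 + C ->
  exists w', (z < w' < x0)%Z /\ f w' >= f x0 + C + INR n * (f x0 - f z).
Proof.
  induction n as [|n IHn]; intros w Hw Hfw.
  - exists w. simpl. split; [exact Hw| lra].
  - destruct (IHn w Hw Hfw) as [w1 [Hw1 Hf1]].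
    destruct (step _ w1 (INR n * (f x0 - f z)) eq_refl
      ltac:(apply Rmult_le_pos; [apply pos_INR| lra]) Hw1 ltac:(lra)) as [w2 [Hw2 Hf2]].
    exists w2. split; [exact Hw2|]. rewrite S_INR. lra.
Qed.

Lemma contra : forall w, (z < w < x0)%Z -> f w >= f x0 + C -> False.
Proof.
  intros w Hw Hfw.
  destruct (bounded f z (Z.to_nat (x0 - z))) as [M HM].
  destruct (archimed ((M - f x0 - C) / (f x0 - f z))) as [Hup _].
  set (m := Z.to_nat (up ((M - f x0 - C) / (f x0 - f z)))).
  destruct (iter m w Hw Hfw) as [w' [Hw' Hf']].
  assert (HMw := HM w' ltac:(lia)).
  assert (Hpos : 0 < f x0 - f z) by lra.
  assert (Hm : (M - f x0 - C) / (f x0 - f z) < INR m).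
  { unfold m. destruct (Z_lt_le_dec (up ((M - f x0 - C) / (f x0 - f z))) 0) as [Hn|Hn].
    - assert (IZR (up ((M - f x0 - C) / (f x0 - f z))) <= 0) by (apply IZR_le; lia).
      pose proof (pos_INR (Z.to_nat (up ((M - f x0 - C) / (f x0 - f z))))). lra.
    - rewrite INR_IZR_INZ, Z2Nat.id by lia. exact Hup. }
  apply (Rmult_lt_compat_r (f x0 - f z)) in Hm; [|exact Hpos].
  unfold Rdiv in Hm. rewrite Rmult_assoc, Rinv_l in Hm by lra. lra.
Qed.

End Core.

Theorem theorem2 (xs xt : Z) (C : R) (f : Z -> R) (x0 b : Z) :
  (xs < xt)%Z ->
  0 <= C ->
  ameso_pair C (in_Zint xs xt) f ->
  in_Zint xs xt x0 ->
  (0 < b)%Z ->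
  (forall y, in_Zint (x0 - b) x0 y -> in_Zint xs xt y) ->
  (* f(x0) = min_{y in [x0-b, xt]} f(y) *)
  (forall y, in_Zint (x0 - b) xt y -> f x0 <= f y) ->
  (* f(x0) + C <= max_{y in [x0-b, x0]} f(y) *)
  (exists y, in_Zint (x0 - b) x0 y /\ f x0 + C <= f y) ->
  forall y, in_Zint xs xt y -> f x0 <= f y.
Proof.
  intros Hxs HC0 [_ [_ HA]] Hx0 Hb Hsub Hmin [w [Hw Hfw]] y Hy.
  unfold in_Zint in *.
  destruct (Z_le_gt_dec (x0 - b) y) as [Hyl|Hyl].
  - apply Hmin. unfold in_Zint; lia.
  - destruct (Rle_lt_dec (f x0) (f y)) as [Hle|Hlt]; [exact Hle|].
    exfalso.
    assert (Hw0 : exists w0, (x0 - b <= w0 < x0)%Z /\ f w0 >= f x0 + C).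
    { destruct (Z.eq_dec w x0) as [->|Hne].
      - exists (x0 - 1)%Z. split; [lia|].
        assert (f x0 <= f (x0 - 1)%Z) by (apply Hmin; unfold in_Zint; lia). lra.
      - exists w. split; [lia| lra]. }
    destruct Hw0 as [w0 [Hw0 Hfw0]].
    assert (Hsw := Hsub w0 ltac:(unfold in_Zint; lia)). unfold in_Zint in Hsw.
    apply (contra xs xt C f y x0 HA HC0 ltac:(lia) ltac:(lia) ltac:(lia) Hlt w0);
      [lia| exact Hfw0].
Qed.
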